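(* Let $C=(1,2,3,c_4,c_4+1,2c_4)$ with $c_4>4$. Then $C$ is canonical and the subsystem $(1,2,3,c_4,c_4+1)$ is noncanonical.
   Context: A system is a tuple $C=(c_1,\dots,c_n)$ of integers with $1=c_1<c_2<\dots<c_n$; for $k\le n$, $(c_1,\dots,c_k)$ is a subsystem. For a positive integer $v$, $\mathrm{opt}_C(v)$ is the minimum of $\sum_i x_i$ over $x\in\mathbb{Z}_{\ge0}^n$ with $\sum_i c_ix_i=v$. The greedy representation of $v$ is produced by: for $i=n$ down to $1$, while $c_i\le$ remaining value, take a coin $c_i$. $\mathrm{grd}_C(v)$ is its number of coins. A positive integer $w$ is a counterexample if $\mathrm{opt}_C(w)<\mathrm{grd}_C(w)$; $C$ is canonical if it has none, noncanonical otherwise. *)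

(* Defs.v *)
From mathcomp Require Import all_boot.
Set Implicit Arguments. Unset Strict Implicit. Unset Printing Implicit Defensive.

Definition is_system (C : seq nat) : bool :=
  (head 0 C == 1) && sorted ltn C.

Definition is_rep (C : seq nat) (v : nat) (x : seq nat) : Prop :=
  size x = size C /\ \sum_(i < size C) nth 0 C i * nth 0 x i = v.

(* opt_C(v) <= k  iff  some representation uses at most k coins;
   opt_C(v) < k   iff  some representation uses fewer than k coins. *)
Definition opt_lt (C : seq nat) (v k : nat) : Prop :=
  exists x, is_rep C v x /\ sumn x < k.

(* Greedy: process coins from largest to smallest; for coin c with remaining
   value r, "while c <= r take c" takes exactly r %/ c coins and leaves r %% c. *)
Fixpoint grd_desc (D : seq nat) (r : nat) : nat :=
  match D with
  | [::] => 0
  | c :: D' => r %/ c + grd_desc D' (r %% c)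
  end.

Definition grd (C : seq nat) (v : nat) : nat := grd_desc (rev C) v.

Definition counterexample (C : seq nat) (w : nat) : Prop :=
  0 < w /\ opt_lt C w (grd C w).

Definition canonical (C : seq nat) : Prop := forall w, ~ counterexample C w.
Definition noncanonical (C : seq nat) : Prop := exists w, counterexample C w.

(* Main.v *)
Require Import Defs.
From mathcomp Require Import all_boot.
From mathcomp Require Import zify.

Lemma divmodE q d r : 0 < d -> r < d -> (q * d + r) %/ d = q /\ (q * d + r) %% d = r.
Proof. move=> d0 rd. rewrite divnMDl // divn_small // modnMDl modn_small //; split=> //; lia. Qed.

Section S.
Variable c : nat.
Hypothesis hc : 4 < c.

Definition g (r : nat) : nat :=
  if r < c then (r + 2) %/ 3 else if r == c then 1 else 1 + (r - c + 1) %/ 3.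

Definition G (w : nat) := w %/ (2 * c) + g (w %% (2 * c)).


Lemma grdE w : grd [:: 1; 2; 3; c; c.+1; 2 * c] w = G w.
Proof.
rewrite /grd /G /=.
have r2 : w %% (2 * c) < 2 * c by rewrite ltn_mod; lia.
move: (w %% (2 * c)) r2 => r r2.
congr (_ + _).
rewrite /g.
case: (ltnP r c) => h1.
  rewrite (divn_small (_ : r < c.+1)); last lia.
  rewrite (modn_small (_ : r < c.+1)); last lia.
  rewrite divn_small // modn_small //. lia.
case: eqP => h2.
  subst r. rewrite divn_small // modn_small // divnn modnn. lia.
have -> : r = 1 * c.+1 + (r - c.+1) by lia.
have [-> ->] := @divmodE 1 c.+1 (r - c.+1) isT ltac:(lia).
rewrite divn_small; last lia. rewrite modn_small; last lia.
lia.
Qed.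

Lemma gspec r : (r < c /\ g r = (r + 2) %/ 3) \/ (r = c /\ g r = 1) \/
  (c < r /\ g r = 1 + (r - c + 1) %/ 3).
Proof. rewrite /g. case: ltnP => h1; first by left. case: eqP => h2; first by right; left.
right; right; split=> //; lia. Qed.

Lemma gA r k : (k == 1) || (k == 2) || (k == 3) || (k == c) || (k == c.+1) ->
  r + k < 2 * c -> g (r + k) <= g r + 1.
Proof.
move=> hk hr.
have := gspec r; have := gspec (r + k); lia.
Qed.

Lemma gB r k : (k == 1) || (k == 2) || (k == 3) || (k == c) || (k == c.+1) ->
  r < 2 * c -> 2 * c <= r + k -> g (r + k - 2 * c) <= g r.
Proof.
move=> hk hr hr2.
have := gspec r; have := gspec (r + k - 2 * c); lia.
Qed.

Lemma step w k : (k == 1) || (k == 2) || (k == 3) || (k == c) || (k == c.+1) || (k == 2 * c) ->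
  G (w + k) <= G w + 1.
Proof.
move=> hk.
have d0 : 0 < 2 * c by lia.
rewrite /G.
rewrite {1 2}(divn_eq w (2 * c)).
have r2 : w %% (2 * c) < 2 * c by rewrite ltn_mod.
set q := w %/ (2 * c). move: (w %% (2 * c)) r2 => r r2.
case/orP: hk => [hk | /eqP hk].
  case: (ltnP (r + k) (2 * c)) => h.
    rewrite -addnA. have [-> ->] := @divmodE q _ _ d0 h.
    have := @gA _ _ hk h. lia.
  have e : q * (2 * c) + r + k = q.+1 * (2 * c) + (r + k - 2 * c) by rewrite mulSn; lia.
  rewrite e.
  have h' : r + k - 2 * c < 2 * c by move: hk; lia.
  have [-> ->] := @divmodE q.+1 _ _ d0 h'.
  have := @gB _ _ hk r2 h. lia.
subst k.
have e : q * (2 * c) + r + 2 * c = q.+1 * (2 * c) + r by rewrite mulSn; lia.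
rewrite e. have [-> ->] := @divmodE q.+1 _ _ d0 r2. lia.
Qed.

Lemma stepn w k n : (k == 1) || (k == 2) || (k == 3) || (k == c) || (k == c.+1) || (k == 2 * c) ->
  G (w + n * k) <= G w + n.
Proof.
move=> hk. elim: n => [|n IH]; first by rewrite mul0n addn0 addn0.
have := @step (w + n * k) k hk. have -> : w + n.+1 * k = w + n * k + k by rewrite mulSn; lia. lia.
Qed.

End S.

Theorem lemma11 (c4 : nat) (hc4 : 4 < c4) :
  canonical [:: 1; 2; 3; c4; c4.+1; 2 * c4] /\
  noncanonical [:: 1; 2; 3; c4; c4.+1].
Proof.
split.
  move=> w [w0 [x [[hs hsum] hlt]]].
  rewrite (@grdE c4 hc4 w) in hlt.
  case: x hs hsum hlt => [|a1 [|a2 [|a3 [|b [|d [|e [|? ?]]]]]]] //= _.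
  rewrite !big_ord_recl big_ord0 /= => hsum hlt.
  have G0 : G c4 0 = 0.
    rewrite /G /g div0n mod0n. have -> : 0 < c4 by lia. by [].
  have H1 := @stepn c4 hc4 0 (1) a1 isT.
  have H2 := @stepn c4 hc4 (0 + a1 * 1) (2) a2 isT.
  have H3 := @stepn c4 hc4 (0 + a1 * 1 + a2 * 2) (3) a3 isT.
  have H4 := @stepn c4 hc4 (0 + a1 * 1 + a2 * 2 + a3 * 3) (c4) b ltac:(by rewrite eqxx !orbT).
  have H5 := @stepn c4 hc4 (0 + a1 * 1 + a2 * 2 + a3 * 3 + b * c4) (c4.+1) d ltac:(by rewrite eqxx !orbT).
  have H6 := @stepn c4 hc4 (0 + a1 * 1 + a2 * 2 + a3 * 3 + b * c4 + d * c4.+1) (2 * c4) e ltac:(by rewrite eqxx !orbT).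
  have ew : 0 + a1 * 1 + a2 * 2 + a3 * 3 + b * c4 + d * c4.+1 + e * (2 * c4) = w.
    rewrite -hsum /bump /=. lia.
  rewrite ew in H6. lia.
exists (2 * c4). split; first lia.
exists [:: 0; 0; 0; 2; 0]. split.
  split => //. rewrite !big_ord_recl big_ord0 /=. lia.
rewrite /grd /=.
have -> : 2 * c4 = 1 * c4.+1 + (c4 - 1) by lia.
have [-> ->] := @divmodE 1 c4.+1 (c4 - 1) isT ltac:(lia).
rewrite divn_small; last lia. rewrite modn_small; last lia.
lia.
Qed.
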